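(* Let $G$ be a connected graph associated with a succinct representation $\mathcal{G}=(H,\{(\ell_i,S_i)\mid 1\le i\le r\})$ where $H$ consists of a single vertex $v$. Then $\mathcal{I}(G)\ge \sum_{i=1}^r\gamma(\ell_i)+\sum_{i=1}^r(\ell_i \bmod 2)$, where $\gamma(\ell)=\ell^2/2$ if $\ell$ is even and $\gamma(\ell)=(\ell^2-1)/2$ if $\ell$ is odd.
   Context: All graphs are finite, simple and undirected. For an ordering $\sigma$ of $V(G)$ and $u\in V(G)$, $N_L(u,\sigma)$ and $N_R(u,\sigma)$ are the sets of neighbours of $u$ preceding and following $u$; $\mathcal{I}(u,\sigma)=\big||N_L(u,\sigma)|-|N_R(u,\sigma)|\big|$, $\mathcal{I}(\sigma)=\sum_u\mathcal{I}(u,\sigma)$, and $\mathcal{I}(G)=\min_\sigma\mathcal{I}(\sigma)$. A succinct representation is a tuple $(H,\{(\ell_i,S_i)\mid 1\le i\le r\})$ where $H$ is a graph, each $\ell_i$ is a positive integer and $S_i\subseteq V(H)$; its associated graph $G$ has vertex set $V(H)\cup C_1\cup\dots\cup C_r$ (pairwise disjoint, $|C_i|=\ell_i$), with edges: those of $H$ on $V(H)$, all edges within each $C_i$, no edges between distinct $C_i$'s, and $w\in V(H)$ adjacent to every vertex of $C_i$ iff $w\in S_i$ (and to none otherwise). *)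

(* Defs.v *)
From mathcomp Require Import all_boot.
Set Implicit Arguments. Unset Strict Implicit. Unset Printing Implicit Defensive.

(* Vertex type of the graph associated with a succinct representation
   (H, {(l_i, S_i) | i < r}): V(H) + disjoint union of cliques C_i, |C_i| = l_i. *)
Definition sr_vertex (TH : finType) (r : nat) (l : 'I_r -> nat) : finType :=
  (TH + {i : 'I_r & 'I_(l i)})%type.

Arguments sr_vertex : clear implicits.
Definition sr_adj (TH : finType) (H : rel TH) (r : nat) (l : 'I_r -> nat)
    (S : 'I_r -> {set TH}) : rel (sr_vertex TH r l) :=
  fun x y =>
    match x, y with
    | inl a, inl b => H a b
    | inr p, inr q => (tag p == tag q) && (p != q)
    | inl a, inr q => a \in S (tag q)
    | inr p, inl b => b \in S (tag p)
    end.

Definition graph_connected (T : finType) (e : rel T) : Prop :=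
  forall x y : T, connect e x y.

(* An ordering of V is a bijection V -> {0,..,|V|-1} (position of each vertex);
   represented as an injective finite function. *)
Definition is_ordering (T : finType) (s : {ffun T -> 'I_#|T|}) : bool :=
  injectiveb s.

Definition NL (T : finType) (e : rel T) (s : {ffun T -> 'I_#|T|}) (u : T) : {set T} :=
  [set w | e u w & (s w < s u)%N].
Definition NR (T : finType) (e : rel T) (s : {ffun T -> 'I_#|T|}) (u : T) : {set T} :=
  [set w | e u w & (s u < s w)%N].

Definition vertex_imbalance (T : finType) (e : rel T) (s : {ffun T -> 'I_#|T|}) (u : T) : nat :=
  (#|NL e s u| - #|NR e s u|) + (#|NR e s u| - #|NL e s u|).

Definition ordering_imbalance (T : finType) (e : rel T) (s : {ffun T -> 'I_#|T|}) : nat :=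
  \sum_(u : T) vertex_imbalance e s u.

(* I(G) = min over orderings; [finfun enum_rank] is an ordering so the min is
   over a nonempty set. *)
Definition graph_imbalance (T : finType) (e : rel T) : nat :=
  ordering_imbalance e
    [arg min_(s < [ffun x => enum_rank x] | is_ordering s) ordering_imbalance e s].

Definition gamma (l : nat) : nat :=
  if odd l then (l ^ 2 - 1) %/ 2 else l ^ 2 %/ 2.

Arguments sr_adj {TH} H {r} l S.

(* Main.v *)
Require Import Defs.
From mathcomp Require Import all_boot.
From mathcomp Require Import zify.

Definition gl (l k : nat) : nat := (k - (l - k)) + ((l - k) - k).

Lemma rank_sum (T : finType) (f : T -> nat) (finj : injective f) (g : nat -> nat) n :
  forall W : {set T}, #|W| = n ->
  \sum_(w in W) g #|[set x in W | f x < f w]| = \sum_(k < n) g k.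
Proof.
elim: n => [|n IH] W hW.
  by rewrite big_ord0 (cards0_eq hW) big_set0.
have [x0 x0W] : exists x0, x0 \in W by apply/card_gt0P; rewrite hW.
case: (arg_maxnP f x0W) => m mW0 mmax.
have mW : m \in W := mW0.
have hW' : #|W :\ m| = n by move: (cardsD1 m W); rewrite mW hW add1n => -[].
rewrite (bigD1 m mW) /= big_ord_recr /= addnC; congr (_ + _).
  rewrite -(IH _ hW'); apply: eq_big => [w|w /andP[wW wm]].
    by rewrite in_setD1 andbC.
  congr g; apply: eq_card => x; rewrite !inE.
  case: (eqVneq x m) => [->|xm] //=.
  have h : f w <= f m := mmax w wW. by rewrite ltnNge h andbF.
congr g; rewrite -hW'; apply: eq_card => x; rewrite !inE.
case xW: (x \in W); rewrite ?andbF // andbT.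
have h : f x <= f m := mmax x xW. move: h; rewrite leq_eqVlt (inj_eq finj).
case: (eqVneq x m) => [->|xm] /=; first by rewrite ltnn. by move=> ->.
Qed.

Lemma gl_step l k : k <= l -> gl l.+2 k.+1 = gl l k.
Proof. rewrite /gl; lia. Qed.

Lemma Tsum_ge l : gamma l + l %% 2 + l <= \sum_(0 <= k < l.+1) gl l k.
Proof.
suff: forall l, (gamma l + l %% 2 + l <= \sum_(0 <= k < l.+1) gl l k) /\
   (gamma l.+1 + l.+1 %% 2 + l.+1 <= \sum_(0 <= k < l.+2) gl l.+1 k) by case/(_ l).
elim=> [|n [IH1 IH2]]; first by split; rewrite /gamma big_mkord !big_ord_recr big_ord0.
split => //.
rewrite big_nat_recl // big_nat_recr //=.
rewrite (eq_big_nat _ _ (F2 := gl n)); last by move=> i /andP[_ hi]; apply: gl_step.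
have -> : gamma n.+2 = gamma n + 2 * n + 2.
  rewrite /gamma /= negbK.
  have e : n.+2 ^ 2 = n ^ 2 + 4 * n + 4 by rewrite !expnS expn0; lia.
  rewrite e; case hn: (odd n).
    have : 0 < n ^ 2 by rewrite expn_gt0; move: hn; case: (n) => //.
    move: (n ^ 2) => a; lia.
  move: (n ^ 2) => a; lia.
have -> : n.+2 %% 2 = n %% 2 by lia.
move: IH1; rewrite /gl; lia.
Qed.

Section Clique.
Variables (TH : finType) (H : rel TH) (r : nat) (l : 'I_r -> nat) (S : 'I_r -> {set TH}).
Variable (v : TH) (vall : forall a : TH, a = v) (vS : forall i, v \in S i).
Local Notation T := (sr_vertex TH r l).
Local Notation e := (sr_adj H l S).
Local Notation tg j := (inr (Tagged (fun k => 'I_(l k)) j) : T).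

Definition Wc (i : 'I_r) : {set T} :=
  [set x : T | if x is inr p then tag p == i else true].

Lemma sumW i (G : T -> nat) :
  \sum_(w in Wc i) G w = \sum_(a : TH) G (inl a) + \sum_(j : 'I_(l i)) G (tg j).
Proof.
rewrite big_sumType /=; congr (_ + _).
  by apply: eq_bigl => a; rewrite inE.
transitivity (\sum_(p : {k : 'I_r & 'I_(l k)} | tag p == i) G (inr p)).
  by apply: eq_bigl => p; rewrite inE.
transitivity (\sum_(k | k == i) \sum_(j : 'I_(l k)) G (tg j)); last first.
  by rewrite (big_pred1_eq _ i (fun k => \sum_(j : 'I_(l k)) G (tg j))).
rewrite (sig_big_dep (fun k => k == i) (fun _ _ => true) (fun k (j : 'I_(l k)) => G (tg j))).
by apply: eq_big => [[k j]|[k j]] //=; rewrite andbT.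
Qed.

Lemma cardW i (H1 : #|TH| = 1) : #|Wc i| = (l i).+1.
Proof.
rewrite -sum1_card sumW. rewrite !sum1_card. by rewrite card_ord H1.
Qed.

Variable (s : {ffun T -> 'I_#|T|}) (sinj : injective s).
Definition f (x : T) : nat := s x.
Lemma finj : injective f.
Proof. by move=> x y /val_inj /sinj. Qed.

Definition rho i (w : T) := #|[set x in Wc i | f x < f w]|.

Lemma vi_eq i (j : 'I_(l i)) (H1 : #|TH| = 1) :
  vertex_imbalance e s (tg j) = gl (l i) (rho i (tg j)).
Proof.
set u := tg j.
have uW : u \in Wc i by rewrite inE /=.
have eL : NL e s u = [set x in Wc i | f x < f u].
  apply/setP => x; rewrite !inE; case: x => [a|p] /=.
    by rewrite (vall a) vS.
  rewrite /f /u; case: (eqVneq (Tagged (fun k => 'I_(l k)) j) p) => [<-|_].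
    by rewrite ltnn !andbF.
  by rewrite andbT eq_sym.
have eR : NR e s u = [set x in Wc i | f u < f x].
  apply/setP => x; rewrite !inE; case: x => [a|p] /=.
    by rewrite (vall a) vS.
  rewrite /f /u; case: (eqVneq (Tagged (fun k => 'I_(l k)) j) p) => [<-|_].
    by rewrite ltnn !andbF.
  by rewrite andbT eq_sym.
have hc := cardsID [set x | f x < f u] (Wc i).
have e1 : Wc i :&: [set x | f x < f u] = [set x in Wc i | f x < f u].
  by apply/setP => x; rewrite !inE.
have e2 : #|Wc i :\: [set x | f x < f u]| = #|[set x in Wc i | f u < f x]|.+1.
  rewrite (cardsD1 u) in_setD uW inE ltnn /= add1n; congr succn; apply: eq_card => x.
  rewrite !inE; case: (eqVneq x u) => [->|xu] /=; first by rewrite ltnn andbF.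
  rewrite -leqNgt leq_eqVlt eq_sym (inj_eq finj).
  by rewrite (negbTE xu) /= andbC.
rewrite /vertex_imbalance eL eR; move: hc; rewrite e1 e2 cardW // /rho /gl -/u.
lia.
Qed.

Lemma rho_le i w (H1 : #|TH| = 1) : w \in Wc i -> rho i w <= l i.
Proof.
move=> wW.
have sub : [set x in Wc i | f x < f w] \subset Wc i :\ w.
  apply/subsetP => x; rewrite !inE => /andP[xW lt]; rewrite xW andbT.
  by apply/eqP => xw; rewrite xw ltnn in lt.
have := subset_leq_card sub; have := cardsD1 w (Wc i); rewrite wW cardW // /rho.
lia.
Qed.

Lemma clique_bound i (H1 : #|TH| = 1) :
  gamma (l i) + l i %% 2 <= \sum_(j : 'I_(l i)) vertex_imbalance e s (tg j).
Proof.
rewrite (eq_bigr (fun j : 'I_(l i) => gl (l i) (rho i (tg j)))) => [|j _]; last exact: vi_eq.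
have h1 := sumW i (fun w => gl (l i) (rho i w)).
have h2 : \sum_(w in Wc i) gl (l i) (rho i w) = \sum_(k < (l i).+1) gl (l i) k
  := @rank_sum _ _ finj (fun k => gl (l i) k) _ _ (cardW i H1).
have h3 : \sum_(a : TH) gl (l i) (rho i (inl a)) <= l i.
  rewrite (eq_bigl (fun a => a == v)) => [|a]; last by rewrite (vall a) eqxx.
  rewrite (big_pred1_eq _ v (fun a => gl (l i) (rho i (inl a)))).
  have := rho_le i (inl v) H1; rewrite inE /gl => /(_ isT); lia.
have h4 := Tsum_ge (l i); rewrite big_mkord in h4.
rewrite -h2 h1 in h4; move: h3 h4; set A := \sum_a _; set B := \sum_(j < l i) _; lia.
Qed.
End Clique.

Theorem proposition2 (TH : finType) (H : rel TH)
    (H_sym : symmetric H) (H_irr : irreflexive H) (H_single : #|TH| = 1)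
    (r : nat) (l : 'I_r -> nat) (l_pos : forall i, (0 < l i)%N)
    (S : 'I_r -> {set TH})
    (G_conn : graph_connected (sr_adj H l S)) :
  (\sum_(i < r) gamma (l i) + \sum_(i < r) (l i %% 2) <= graph_imbalance (sr_adj H l S))%N.
Proof.
have [v vall] := fintype1 H_single.
have vS : forall i, v \in S i.
  move=> i; case vSi: (v \in S i) => //.
  pose a := [pred x : sr_vertex TH r l | if x is inr p then tag p == i else false].
  have cl : closed (sr_adj H l S) a.
    move=> [b|p] [c|q]; rewrite !inE /=.
    - by [].
    - rewrite (vall b); case: (eqVneq (tag q) i) => [->|] //; by rewrite vSi.
    - rewrite (vall c); case: (eqVneq (tag p) i) => [->|] //; by rewrite vSi.
    - by case/andP => /eqP ->.
  have := closed_connect cl (G_conn (inr (Tagged (fun k => 'I_(l k)) (Ordinal (l_pos i)))) (inl v)).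
  by rewrite !inE /= eqxx.
rewrite /graph_imbalance.
have P0 : is_ordering [ffun x : sr_vertex TH r l => enum_rank x].
  by apply/injectiveP => x y; rewrite !ffunE; apply: enum_rank_inj.
case: (arg_minnP (ordering_imbalance (sr_adj H l S)) P0) => s sord _.
have sinj : injective s by apply/injectiveP.
rewrite -big_split /= /ordering_imbalance big_sumType /=.
apply: leq_trans (leq_addl _ _).
set F := fun k (j : 'I_(l k)) => vertex_imbalance (sr_adj H l S) s (inr (Tagged (fun k => 'I_(l k)) j)).
have -> : \sum_p vertex_imbalance (sr_adj H l S) s (inr p) = \sum_(k < r) \sum_(j : 'I_(l k)) F k j.
  rewrite (sig_big_dep xpredT (fun _ _ => true) F).
  by apply: eq_big => [[k j]|[k j]].
apply: leq_sum => i _.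
exact: clique_bound.
Qed.
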